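(* Let $\alpha=2\sqrt7-4$ and fix $\varepsilon>0$. For every balanced tetrahedral erasure channel $W$ with $Q(W)\le\alpha-\varepsilon$, there exists an integer $m>0$ such that for all $n\ge m$, every $n$th-generation descendant $W'$ of $W$ satisfies $Q(W')\ge Q(W)(1+\varepsilon/8)$ (i.e. $Q(W_n)\ge Q(W)(1+\varepsilon/8)$ for all $n\ge m$).
   Context: $\mathrm{TEC}(p,q,r,s,t)$ denotes a tetrahedral erasure channel with parameters $p,q,r,s,t\ge0$ summing to $1$. Its entropy is $H=\frac{q+r+s}{2}+t$, its edge mass is $E=q+r+s$, and its Quetelet index is $Q=E/(H(1-H))$ (defined when $0<H<1$). It is balanced if $q=r=s$. For $W=\mathrm{TEC}(p,q,r,s,t)$, the serial child is $W^{s}=\mathrm{TEC}(p^2,\ ps+sq+qp,\ pq+qr+rp,\ pr+rs+sp,\ 1-\text{(sum of the other four)})$ and the parallel child is $W^{p}=\mathrm{TEC}(1-\text{(sum of the other four)},\ ts+sq+qt,\ tq+qr+rt,\ tr+rs+st,\ t^2)$. The $0$th-generation descendant of $W$ is $W$; the $n$th-generation descendants are the children of the $(n-1)$th-generation descendants; $W_n$ denotes a random $n$th-generation descendant (each step choosing a child with probability $1/2$). *)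

(* Defs.v *)
From Stdlib Require Import Reals.
Open Scope R_scope.

Record tec := TEC { tp : R; tq : R; tr : R; ts : R; tt : R }.

Definition valid_tec (W : tec) : Prop :=
  0 <= tp W /\ 0 <= tq W /\ 0 <= tr W /\ 0 <= ts W /\ 0 <= tt W /\
  tp W + tq W + tr W + ts W + tt W = 1.

Definition entropy (W : tec) : R := (tq W + tr W + ts W) / 2 + tt W.
Definition edge_mass (W : tec) : R := tq W + tr W + ts W.
(* Quetelet index; only meaningful when 0 < entropy W < 1. *)
Definition quetelet (W : tec) : R :=
  edge_mass W / (entropy W * (1 - entropy W)).

Definition balanced (W : tec) : Prop := tq W = tr W /\ tr W = ts W.

Definition serial_child (W : tec) : tec :=
  let p := tp W in let q := tq W in let r := tr W in let s := ts W in
  let p' := p * p in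
  let q' := p * s + s * q + q * p in
  let r' := p * q + q * r + r * p in
  let s' := p * r + r * s + s * p in
  TEC p' q' r' s' (1 - (p' + q' + r' + s')).

Definition parallel_child (W : tec) : tec :=
  let q := tq W in let r := tr W in let s := ts W in let t := tt W in
  let q' := t * s + s * q + q * t in
  let r' := t * q + q * r + r * t in
  let s' := t * r + r * s + s * t in
  let t' := t * t in
  TEC (1 - (q' + r' + s' + t')) q' r' s' t'.

Inductive descendant : nat -> tec -> tec -> Prop :=
| desc0 : forall W, descendant 0 W W
| desc_serial : forall n W V, descendant n W V -> descendant (S n) W (serial_child V)
| desc_parallel : forall n W V, descendant n W V -> descendant (S n) W (parallel_child V).

Definition alpha : R := 2 * sqrt 7 - 4.

(* Main.v *)
Require Import Defs.
From Stdlib Require Import Reals Lra Psatz.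
Open Scope R_scope.

Lemma alpha_eq : alpha * alpha + 8 * alpha = 12.
Proof. unfold alpha. assert (H := sqrt_sqrt 7 ltac:(lra)). nra. Qed.

Lemma alpha_bounds : 1.2915 <= alpha <= 1.2916.
Proof. unfold alpha. assert (H := sqrt_sqrt 7 ltac:(lra)).
  assert (H0 := sqrt_pos 7). split; nra. Qed.

Lemma LB u al : 0 <= u <= 2 -> 1.2915 <= al <= 1.2916 ->
  0 <= 4 - (8/3)*al - (2/3)*u + (13/36)*u*al - (1/6)*u^2 + (1/9)*u^2*al + (1/144)*u^3*al.
Proof. intros.
  assert (0 <= u*(al-1.2915)) by (apply Rmult_le_pos; lra).
  assert (0 <= u^2*(al-1.2915)) by (apply Rmult_le_pos; [apply pow2_ge_0|lra]).
  assert (0 <= u^3*al) by (apply Rmult_le_pos; [apply pow_le|]; lra).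
  assert (u^2 <= 2*u) by nra.
  nra. Qed.

Lemma LA u w al : 0 <= u <= 2 -> 0 <= w -> u <= al + w -> al + w - u <= 2 -> 1.2915 <= al <= 1.2916 ->
  0 <= 2*al + 2*w - 2*u - (2/3)*u*w - (1/12)*u*w*al + (1/3)*u^2*al + (1/6)*u^3 - (1/9)*u^3*al + (1/144)*u^3*w*al - (1/72)*u^4*al.
Proof. intros.
  pose (SS := 2 - (2/3)*u - (al/12)*u + (al/144)*u^3).
  pose (CC := al/3 + (1/6 - al/9)*u - (al/72)*u^2).
  assert (HS : 0.4 <= SS).
  { unfold SS. assert (0 <= u^3*al) by (apply Rmult_le_pos; [apply pow_le|]; lra).
    assert (u*al <= 2*1.2916) by nra. nra. }
  assert (HC : 0.3 <= CC).
  { unfold CC. assert (u*al <= 2*1.2916) by nra. assert (u^2 <= 4) by nra.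
    assert (u^2*al <= 4*1.2916) by nra. nra. }
  replace (2*al + 2*w - 2*u - (2/3)*u*w - (1/12)*u*w*al + (1/3)*u^2*al + (1/6)*u^3 - (1/9)*u^3*al + (1/144)*u^3*w*al - (1/72)*u^4*al)
    with (2*(al-u) + u^2*CC + w*SS) by (unfold SS, CC; field).
  destruct (Rle_dec u al).
  - assert (0 <= u^2*CC) by (apply Rmult_le_pos; [apply pow2_ge_0|lra]).
    assert (0 <= w*SS) by (apply Rmult_le_pos; lra). lra.
  - assert ((u-al)*SS <= w*SS) by (apply Rmult_le_compat_r; lra).
    assert (0.3*u^2 <= u^2*CC) by (assert (0<=u^2) by apply pow2_ge_0; nra).
    assert (u-al <= 0.71) by lra.
    nra.
Qed.

Lemma Pmain u Q al : 0 <= u <= 2 -> al <= Q -> u <= Q -> Q - u <= 2 ->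
  1.2915 <= al <= 1.2916 -> al*al + 8*al = 12 ->
  0 <= 2*Q*Q*(1-u/3) - al*(1-u*u/12)*(Q + (Q-u) + u*(Q-u)*(Q-u)/12).
Proof. intros Hu HQ HuQ HQu Hal Heq.
  pose (w := Q - al).
  assert (HA := LA u w al Hu ltac:(unfold w; lra) ltac:(unfold w; lra) ltac:(unfold w; lra) Hal).
  assert (HB := LB u al Hu Hal).
  assert (HwA : 0 <= w * (2*al + 2*w - 2*u - (2/3)*u*w - (1/12)*u*w*al + (1/3)*u^2*al + (1/6)*u^3 - (1/9)*u^3*al + (1/144)*u^3*w*al - (1/72)*u^4*al))
   by (apply Rmult_le_pos; unfold w in *; lra).
  assert (HuB : 0 <= u^2 * (4 - (8/3)*al - (2/3)*u + (13/36)*u*al - (1/6)*u^2 + (1/9)*u^2*al + (1/144)*u^3*al))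
   by (apply Rmult_le_pos; [apply pow2_ge_0|lra]).
  replace Q with (al + w) by (unfold w; ring).
  pose (K := (-1/12)*u*al + (-1/6)*u*w + (1/3)*u^2 + (-1/18)*u^3 + (1/144)*u^3*al + (1/72)*u^3*w + (-1/72)*u^4).
  replace (2 * (al + w) * (al + w) * (1 - u / 3) - al * (1 - u * u / 12) * (al + w + (al + w - u) + u * (al + w - u) * (al + w - u) / 12))
  with (w * (2*al + 2*w - 2*u - (2/3)*u*w - (1/12)*u*w*al + (1/3)*u^2*al + (1/6)*u^3 - (1/9)*u^3*al + (1/144)*u^3*w*al - (1/72)*u^4*al)
    + u^2 * (4 - (8/3)*al - (2/3)*u + (13/36)*u*al - (1/6)*u^2 + (1/9)*u^2*al + (1/144)*u^3*al)
    + (al*al + 8*al - 12) * K) by (unfold K; field).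
  rewrite Heq. lra.
Qed.

Lemma le_div X Y Z : 0 < Z -> X * Z <= Y -> X <= Y / Z.
Proof. intros HZ H. apply (Rmult_le_reg_r Z); auto.
  replace (Y / Z * Z) with Y by (field; lra). lra. Qed.

Lemma core a b e : 0 < a -> 0 < b -> a + b = 1 -> 0 <= e -> e <= 2*a -> e <= 2*b ->
  let b' := b*b - e*e/12 in let a' := 1 - b' in let e' := 2*b*e - 2*e*e/3 in
  0 < b' /\ a*(1+b) <= a' /\ (2/3)*(b*b) <= b' /\ b*b - a*a/3 <= b' /\
  (forall d, 0 <= d -> e/(a*b) <= alpha - d -> e/(a*b) * (1 + 2*d/9*a) <= e'/(a'*b')) /\
  (alpha <= e/(a*b) -> alpha <= e'/(a'*b')).
Proof.
  intros Ha Hb Hab He Hea Heb b' a' e'.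
  pose (Q := e/(a*b)).
  assert (HeQ : e = Q*a*b) by (unfold Q; field; lra).
  assert (HQdef : e/(a*b) = Q) by reflexivity. clearbody Q.
  assert (HQ0 : 0 <= Q) by (rewrite <- HQdef; unfold Rdiv; apply Rmult_le_pos; [lra|]; apply Rlt_le, Rinv_0_lt_compat; nra).
  assert (HQa : Q*a <= 2) by (rewrite HeQ in Heb; nra).
  assert (HQb : Q*b <= 2) by (rewrite HeQ in Hea; nra).
  assert (Hbq : b = 1 - a) by lra.
  pose (Da := 1 + b + Q*Q*a*b*b/12).
  pose (Db := 1 - Q*Q*a*a/12).
  assert (Ha' : a' = a * Da). { unfold a', b', Da. rewrite HeQ, Hbq. field. }
  assert (Hb' : b' = b*b*Db) by (unfold b', Db; rewrite HeQ; field).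
  assert (He' : e' = 2*Q*a*b*b*(1 - Q*a/3)) by (unfold e'; rewrite HeQ; field).
  assert (HDb : 2/3 <= Db <= 1).
  { unfold Db. assert (0 <= Q*a) by nra. assert ((Q*a)*(Q*a) <= 4) by nra. nra. }
  assert (HDa : 1 <= Da <= 7/3).
  { unfold Da. assert (0 <= Q*a) by nra. assert (0 <= Q*b) by nra.
    assert ((Q*a)*(Q*b) <= 4) by nra. assert (0 <= (Q*a)*(Q*b)) by nra.
    assert ((Q*a)*(Q*b)*b <= 4) by nra. assert (0 <= (Q*a)*(Q*b)*b) by nra.
    replace (Q*Q*a*b*b) with ((Q*a)*(Q*b)*b) by field. lra. }
  assert (Hbb : 0 < b*b) by nra.
  assert (Hb'pos : 0 < b') by (rewrite Hb'; nra).
  assert (Ha'pos : 0 < a') by (rewrite Ha'; nra).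
  assert (Hprod : 0 < a'*b') by nra.
  rewrite HQdef.
  split; [exact Hb'pos|].
  split. { unfold a', b'. rewrite Hbq. nra. }
  split. { unfold b'. nra. }
  split. { unfold b'. nra. }
  assert (Hiden : 2*(1 - Q*a/3) - Da*Db = a * ((12 - 8*Q - Q*Q)/12 + Q*Q*a*(4-2*a)/12 + Q*Q*Q*Q*a*a*b*b/144)).
  { unfold Da, Db. rewrite Hbq. field. }
  assert (Hal := alpha_eq). assert (Hal2 := alpha_bounds).
  split.
  - intros d Hd HQd. apply le_div; [exact Hprod|].
    rewrite Ha', Hb', He'.
    assert (H12 : 8*d <= 12 - 8*Q - Q*Q) by nra.
    assert (Hx1 : 0 <= Q*Q*a*(4-2*a)/12).
    { assert (0 <= Q*Q) by nra. assert (0 <= Q*Q*a) by nra. assert (0 <= 4 - 2*a) by lra.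
      assert (0 <= Q*Q*a*(4-2*a)) by nra. lra. }
    assert (Hx2 : 0 <= Q*Q*Q*Q*a*a*b*b/144).
    { replace (Q*Q*Q*Q*a*a*b*b) with ((Q*Q*a*b)*(Q*Q*a*b)) by field.
      assert (0 <= (Q*Q*a*b)*(Q*Q*a*b)) by nra. lra. }
    assert (HDD : Da*Db <= 3) by nra.
    assert (HDD0 : 0 <= Da*Db) by nra.
    assert (Hred : (1 + 2*d/9*a)*(Da*Db) <= 2*(1-Q*a/3)).
    { assert (2*d/9*a*(Da*Db) <= a * (2*d/3)).
      { assert (2*d/9*(Da*Db) <= 2*d/3) by nra. nra. }
      assert (a * (2*d/3) <= a * ((12 - 8*Q - Q*Q)/12 + Q*Q*a*(4-2*a)/12 + Q*Q*Q*Q*a*a*b*b/144)).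
      { apply Rmult_le_compat_l; lra. }
      nra. }
    assert (Hqab : 0 <= Q*a*b*b) by (assert (0 <= Q*a) by nra; nra).
    replace (Q * (1 + 2 * d / 9 * a) * (a * Da * (b * b * Db))) with ((Q*a*b*b) * ((1 + 2*d/9*a)*(Da*Db))) by field.
    replace (2 * Q * a * b * b * (1 - Q * a / 3)) with ((Q*a*b*b) * (2*(1-Q*a/3))) by field.
    apply Rmult_le_compat_l; lra.
  - intros HaQ. apply le_div; [exact Hprod|].
    rewrite Ha', Hb', He'.
    assert (HQpos : 0 < Q) by lra.
    assert (HP := Pmain (Q*a) Q alpha ltac:(nra) HaQ ltac:(nra) ltac:(nra) Hal2 Hal).
    assert (Hred : alpha*(Da*Db) <= 2*Q*(1-Q*a/3)).
    { apply (Rmult_le_reg_l Q); [exact HQpos|].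
      assert (Q * (2*Q*(1-Q*a/3)) - Q*(alpha*(Da*Db)) =
        2*Q*Q*(1-(Q*a)/3) - alpha*(1-(Q*a)*(Q*a)/12)*(Q + (Q-(Q*a)) + (Q*a)*(Q-(Q*a))*(Q-(Q*a))/12)).
      { unfold Da, Db. rewrite Hbq. field. }
      lra. }
    assert (Hab2 : 0 <= a*b*b) by nra.
    replace (alpha * (a * Da * (b * b * Db))) with ((a*b*b) * (alpha*(Da*Db))) by field.
    replace (2 * Q * a * b * b * (1 - Q * a / 3)) with ((a*b*b) * (2*Q*(1-Q*a/3))) by field.
    apply Rmult_le_compat_l; lra.
Qed.

Definition st (W : tec) : Prop := valid_tec W /\ balanced W /\ 0 < entropy W < 1.

Lemma tec_facts W : valid_tec W -> balanced W ->
  0 <= edge_mass W /\ edge_mass W <= 2 * entropy W /\ edge_mass W <= 2 * (1 - entropy W).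
Proof.
  destruct W as [p q r s t]. unfold valid_tec, balanced, entropy, edge_mass. simpl.
  intros [Hp [Hq [Hr [Hs [Ht Hsum]]]]] [E1 E2]. subst. lra.
Qed.

Lemma serial_facts W : valid_tec W -> balanced W ->
  valid_tec (serial_child W) /\ balanced (serial_child W) /\
  1 - entropy (serial_child W) = (1 - entropy W)*(1 - entropy W) - edge_mass W * edge_mass W / 12 /\
  edge_mass (serial_child W) = 2*(1 - entropy W)*edge_mass W - 2*edge_mass W*edge_mass W/3.
Proof.
  destruct W as [p q r s t]. unfold valid_tec, balanced, entropy, edge_mass, serial_child. simpl.
  intros [Hp [Hq [Hr [Hs [Ht Hsum]]]]] [E1 E2]. subst.
  assert (t = 1 - p - 3*s) by lra. subst t.
  split; [|split; [split; field|split; field]].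
  split; [nra|]. split; [nra|]. split; [nra|]. split; [nra|]. split; [|field].
  assert (H : 1 - (p*p + (p*s+s*s+s*p) + (p*s+s*s+s*p) + (p*s+s*s+s*p)) =
    6*s*s + (1-p-3*s)*(1-p-3*s) + 2*p*(1-p-3*s) + 6*s*(1-p-3*s)) by field.
  rewrite H. nra.
Qed.

Lemma parallel_facts W : valid_tec W -> balanced W ->
  valid_tec (parallel_child W) /\ balanced (parallel_child W) /\
  entropy (parallel_child W) = entropy W * entropy W - edge_mass W * edge_mass W / 12 /\
  edge_mass (parallel_child W) = 2*entropy W*edge_mass W - 2*edge_mass W*edge_mass W/3.
Proof.
  destruct W as [p q r s t]. unfold valid_tec, balanced, entropy, edge_mass, parallel_child. simpl.
  intros [Hp [Hq [Hr [Hs [Ht Hsum]]]]] [E1 E2]. subst.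
  assert (p = 1 - t - 3*s) by lra. subst p.
  split; [|split; [split; field|split; field]].
  split; [|split; [nra|split; [nra|split; [nra|split; [nra|field]]]]].
  assert (H : 1 - ((t*s+s*s+s*t) + (t*s+s*s+s*t) + (t*s+s*s+s*t) + t*t) =
    6*s*s + (1-t-3*s)*(1-t-3*s) + 2*t*(1-t-3*s) + 6*s*(1-t-3*s)) by field.
  rewrite H. nra.
Qed.

Lemma from_core T d x QV QC : 0 <= T -> 0 <= d -> T + d <= alpha -> 0 <= QV -> 0 <= x ->
  (forall d0, 0 <= d0 -> QV <= alpha - d0 -> QV * (1 + 2*d0/9*x) <= QC) ->
  (alpha <= QV -> alpha <= QC) ->
  Rmin T QV <= QC /\ (1/4 <= x -> Rmin T ((1 + d/18) * QV) <= QC).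
Proof.
  intros HT Hd HTd HQ Hx H1 H2.
  assert (A : Rmin T QV <= QC).
  { destruct (Rle_dec alpha QV) as [h|h].
    - assert (Rmin T QV <= T) by apply Rmin_l. specialize (H2 h). lra.
    - assert (QV * (1 + 2*0/9*x) <= QC) by (apply H1; lra).
      assert (Rmin T QV <= QV) by apply Rmin_r. nra. }
  split; [exact A|].
  intros Hx4.
  destruct (Rle_dec T QV) as [h|h].
  - rewrite Rmin_left in A by lra. assert (Rmin T ((1 + d/18) * QV) <= T) by apply Rmin_l. lra.
  - assert (QV * (1 + 2*d/9*x) <= QC) by (apply H1; lra).
    assert (Rmin T ((1 + d/18) * QV) <= (1 + d/18) * QV) by apply Rmin_r.
    assert (QV * (d/18) <= QV * (2*d/9*x)) by (apply Rmult_le_compat_l; nra).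
    nra.
Qed.

Lemma Q_nonneg V : st V -> 0 <= quetelet V.
Proof. intros [Hv [Hb Hh]]. destruct (tec_facts V Hv Hb) as [He _].
  unfold quetelet. unfold Rdiv. apply Rmult_le_pos; [lra|].
  apply Rlt_le, Rinv_0_lt_compat. nra. Qed.

Lemma step_serial T d V : 0 <= T -> 0 <= d -> T + d <= alpha -> st V ->
  st (serial_child V) /\ Rmin T (quetelet V) <= quetelet (serial_child V) /\
  (1/4 <= entropy V -> Rmin T ((1 + d/18) * quetelet V) <= quetelet (serial_child V) /\
      entropy V <= entropy (serial_child V) /\
      (2/3)*((1-entropy V)*(1-entropy V)) <= 1 - entropy (serial_child V)) /\
  (entropy V < 1/4 -> (7/4)*entropy V <= entropy (serial_child V) /\ 1/4 <= 1 - entropy (serial_child V)).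
Proof.
  intros HT Hd HTd HV.
  assert (HQ := Q_nonneg V HV).
  destruct HV as [Hv [Hb Hh]].
  destruct (tec_facts V Hv Hb) as [He1 [He2 He3]].
  destruct (serial_facts V Hv Hb) as [Cv [Cb [CH CE]]].
  set (a := entropy V) in *. set (e := edge_mass V) in *.
  assert (Hc := core a (1-a) e ltac:(lra) ltac:(lra) ltac:(lra) He1 He2 He3).
  simpl in Hc. destruct Hc as [C1 [C2 [C3 [C4 [C5 C6]]]]].
  assert (HCa : entropy (serial_child V) = 1 - ((1-a)*(1-a) - e*e/12)) by lra.
  assert (HQV : quetelet V = e/(a*(1-a))) by reflexivity.
  assert (HQC : quetelet (serial_child V) = (2*(1-a)*e - 2*e*e/3) / ((1 - ((1-a)*(1-a) - e*e/12)) * ((1-a)*(1-a) - e*e/12))).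
  { unfold quetelet. rewrite CE, HCa. fold e. f_equal. f_equal. lra. }
  rewrite <- HQV in C5, C6. rewrite <- HQC in C5, C6.
  destruct (from_core T d a _ _ HT Hd HTd HQ ltac:(lra) C5 C6) as [F1 F2].
  split. { split; [exact Cv|split; [exact Cb|]]. rewrite HCa. nra. }
  split; [exact F1|].
  split.
  - intros h. split; [auto|]. split; [rewrite HCa; nra|]. rewrite CH. lra.
  - intros h. split; [rewrite HCa; nra|]. rewrite CH. nra.
Qed.

Lemma step_parallel T d V : 0 <= T -> 0 <= d -> T + d <= alpha -> st V ->
  st (parallel_child V) /\ Rmin T (quetelet V) <= quetelet (parallel_child V) /\
  (1/4 <= 1 - entropy V -> Rmin T ((1 + d/18) * quetelet V) <= quetelet (parallel_child V) /\
      1 - entropy V <= 1 - entropy (parallel_child V) /\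
      (2/3)*(entropy V * entropy V) <= entropy (parallel_child V)) /\
  (1 - entropy V < 1/4 -> (7/4)*(1 - entropy V) <= 1 - entropy (parallel_child V) /\ 1/4 <= entropy (parallel_child V)).
Proof.
  intros HT Hd HTd HV.
  assert (HQ := Q_nonneg V HV).
  destruct HV as [Hv [Hb Hh]].
  destruct (tec_facts V Hv Hb) as [He1 [He2 He3]].
  destruct (parallel_facts V Hv Hb) as [Cv [Cb [CH CE]]].
  set (a := entropy V) in *. set (e := edge_mass V) in *.
  assert (Hc := core (1-a) a e ltac:(lra) ltac:(lra) ltac:(lra) He1 He3 He2).
  simpl in Hc. destruct Hc as [C1 [C2 [C3 [C4 [C5 C6]]]]].
  assert (HQV : quetelet V = e/((1-a)*a)) by (unfold quetelet; fold a e; f_equal; ring).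
  assert (HQC : quetelet (parallel_child V) = (2*a*e - 2*e*e/3) / ((1 - (a*a - e*e/12)) * (a*a - e*e/12))).
  { unfold quetelet. rewrite CE, CH. fold e. f_equal. ring. }
  rewrite <- HQV in C5, C6. rewrite <- HQC in C5, C6.
  destruct (from_core T d (1-a) _ _ HT Hd HTd HQ ltac:(lra) C5 C6) as [F1 F2].
  split. { split; [exact Cv|split; [exact Cb|]]. rewrite CH. nra. }
  split; [exact F1|].
  split.
  - intros h. split; [auto|]. split; [rewrite CH; nra|]. rewrite CH. lra.
  - intros h. split; [rewrite CH; nra|]. rewrite CH. nra.
Qed.

Lemma desc_front n V W' : descendant (S n) V W' ->
  exists C, (C = serial_child V \/ C = parallel_child V) /\ descendant n C W'.
Proof.
  revert W'. induction n as [|n IH]; intros W' H.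
  - inversion H; subst; inversion H1; subst.
    + exists (serial_child V0). split; [left; reflexivity| constructor].
    + exists (parallel_child V0). split; [right; reflexivity| constructor].
  - inversion H; subst.
    + destruct (IH _ H1) as [C [HC HD]]. exists C. split; [exact HC|]. now constructor.
    + destruct (IH _ H1) as [C [HC HD]]. exists C. split; [exact HC|]. now constructor.
Qed.

Lemma mono T d n V W' : 0 <= T -> 0 <= d -> T + d <= alpha -> descendant n V W' -> st V ->
  st W' /\ Rmin T (quetelet V) <= quetelet W'.
Proof.
  intros HT Hd HTd H. induction H as [W|n W U H IH|n W U H IH]; intros HV.
  - split; [exact HV|apply Rmin_r].
  - destruct (IH HV) as [HU HQ].
    destruct (step_serial T d U HT Hd HTd HU) as [S1 [S2 _]].
    split; [exact S1|].
    assert (Rmin T (quetelet W) <= Rmin T (quetelet U)) by (apply Rmin_glb; [apply Rmin_l|exact HQ]).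
    lra.
  - destruct (IH HV) as [HU HQ].
    destruct (step_parallel T d U HT Hd HTd HU) as [S1 [S2 _]].
    split; [exact S1|].
    assert (Rmin T (quetelet W) <= Rmin T (quetelet U)) by (apply Rmin_glb; [apply Rmin_l|exact HQ]).
    lra.
Qed.

Lemma combine T r Z Y X : 0 <= T -> 1 <= r -> Rmin T Z <= Y -> Rmin T (r*Y) <= X -> Rmin T (r*Z) <= X.
Proof.
  intros HT Hr H1 H2.
  destruct (Rle_dec T Y) as [h|h].
  - rewrite Rmin_left in H2 by nra. assert (Rmin T (r*Z) <= T) by apply Rmin_l. lra.
  - assert (Z <= Y).
    { unfold Rmin in H1. destruct (Rle_dec T Z); lra. }
    assert (Rmin T (r*Z) <= Rmin T (r*Y)) by (apply Rmin_glb; [apply Rmin_l|]; 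
      assert (Rmin T (r*Z) <= r*Z) by apply Rmin_r; nra).
    lra.
Qed.

Lemma pow_ge1 r k : 1 <= r -> 1 <= r ^ k.
Proof. intros Hr. induction k; simpl; nra. Qed.

Lemma grow T d : 0 <= T -> 0 <= d -> T + d <= alpha ->
  forall g mu, 0 < mu <= 1/4 -> exists M, forall n V W', (M <= n)%nat -> st V ->
    mu <= entropy V -> mu <= 1 - entropy V -> descendant n V W' ->
    Rmin T ((1 + d/18)^g * quetelet V) <= quetelet W'.
Proof.
  intros HT Hd HTd g. induction g as [|g IHg]; intros mu Hmu.
  - exists 0%nat. intros n V W' _ HV _ _ HD.
    destruct (mono T d n V W' HT Hd HTd HD HV) as [_ H]. simpl. rewrite Rmult_1_l. exact H.
  - set (rho := 1 + d/18).
    assert (Hrho : 1 <= rho) by (unfold rho; lra).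
    assert (Hnu : 0 < (2/3)*(mu*mu) <= 1/4) by nra.
    destruct (IHg _ Hnu) as [M' HM'].
    destruct (Pow_x_infinity (7/4) ltac:(rewrite Rabs_pos_eq; lra) (1/(4*mu))) as [K HK].
    specialize (HK K (le_n K)). rewrite Rabs_pos_eq in HK by (apply pow_le; lra).
    assert (HKmu : 1/4 <= (7/4)^K * mu).
    { assert (1/(4*mu) * mu = 1/4) by (field; lra). nra. }
    assert (Inner : forall j, forall n V W', (j + 1 + M' <= n)%nat -> st V ->
      mu <= entropy V -> mu <= 1 - entropy V ->
      1/4 <= (7/4)^j * entropy V -> 1/4 <= (7/4)^j * (1 - entropy V) ->
      descendant n V W' -> Rmin T (rho^(S g) * quetelet V) <= quetelet W').
    { intro j. induction j as [|j IHj]; intros n V W' Hn HV Hm1 Hm2 Hj1 Hj2 HD.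
      - destruct n as [|n]; [lia|].
        destruct (desc_front n V W' HD) as [C [HC HD']].
        simpl in Hj1, Hj2. rewrite Rmult_1_l in Hj1, Hj2.
        destruct HC as [HC|HC]; subst C.
        + destruct (step_serial T d V HT Hd HTd HV) as [S1 [S2 [S3 S4]]].
          destruct (S3 Hj1) as [G1 [G2 G3]].
          assert (HW := HM' n (serial_child V) W' ltac:(lia) S1 ltac:(nra) ltac:(nra) HD').
          replace (rho ^ S g * quetelet V) with (rho^g * (rho * quetelet V)) by (simpl; ring).
          apply (combine T (rho^g) _ (quetelet (serial_child V))); auto. apply pow_ge1; lra.
        + destruct (step_parallel T d V HT Hd HTd HV) as [S1 [S2 [S3 S4]]].
          destruct (S3 Hj2) as [G1 [G2 G3]].
          assert (HW := HM' n (parallel_child V) W' ltac:(lia) S1 ltac:(nra) ltac:(nra) HD').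
          replace (rho ^ S g * quetelet V) with (rho^g * (rho * quetelet V)) by (simpl; ring).
          apply (combine T (rho^g) _ (quetelet (parallel_child V))); auto. apply pow_ge1; lra.
      - destruct n as [|n]; [lia|].
        destruct (desc_front n V W' HD) as [C [HC HD']].
        assert (Hp := pow_ge1 (7/4) j ltac:(lra)).
        assert (Hp0 : 0 <= (7/4)^j) by lra.
        replace ((7/4)^(S j)) with ((7/4)^j * (7/4)) in Hj1, Hj2 by (simpl; ring).
        destruct HC as [HC|HC]; subst C.
        + destruct (step_serial T d V HT Hd HTd HV) as [S1 [S2 [S3 S4]]].
          destruct (Rle_dec (1/4) (entropy V)) as [h|h].
          * destruct (S3 h) as [G1 [G2 G3]].
            assert (HW := HM' n (serial_child V) W' ltac:(lia) S1 ltac:(nra) ltac:(nra) HD').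
            replace (rho ^ S g * quetelet V) with (rho^g * (rho * quetelet V)) by (simpl; ring).
            apply (combine T (rho^g) _ (quetelet (serial_child V))); auto. apply pow_ge1; lra.
          * destruct (S4 ltac:(lra)) as [B1 B2].
            assert (HW := IHj n (serial_child V) W' ltac:(lia) S1 ltac:(lra) ltac:(lra) ltac:(nra) ltac:(nra) HD').
            apply (combine T (rho^(S g)) _ (quetelet (serial_child V))); auto.
            apply pow_ge1; lra.
        + destruct (step_parallel T d V HT Hd HTd HV) as [S1 [S2 [S3 S4]]].
          destruct (Rle_dec (1/4) (1 - entropy V)) as [h|h].
          * destruct (S3 h) as [G1 [G2 G3]].
            assert (HW := HM' n (parallel_child V) W' ltac:(lia) S1 ltac:(nra) ltac:(nra) HD').
            replace (rho ^ S g * quetelet V) with (rho^g * (rho * quetelet V)) by (simpl; ring).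
            apply (combine T (rho^g) _ (quetelet (parallel_child V))); auto. apply pow_ge1; lra.
          * destruct (S4 ltac:(lra)) as [B1 B2].
            assert (HW := IHj n (parallel_child V) W' ltac:(lia) S1 ltac:(lra) ltac:(lra) ltac:(nra) ltac:(nra) HD').
            apply (combine T (rho^(S g)) _ (quetelet (parallel_child V))); auto.
            apply pow_ge1; lra. }
    exists (K + 1 + M')%nat. intros n V W' Hn HV Hm1 Hm2 HD.
    assert (Hp := pow_ge1 (7/4) K ltac:(lra)).
    apply (Inner K n V W' Hn HV Hm1 Hm2); try nra; auto.
Qed.

Theorem mainTheorem7 (eps : R) (heps : 0 < eps) (W : tec)
  (hW : valid_tec W) (hbal : balanced W)
  (hH : 0 < entropy W < 1)
  (hQ : quetelet W <= alpha - eps) :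
  exists m : nat, (0 < m)%nat /\
    forall (n : nat) (W' : tec), (m <= n)%nat -> descendant n W W' ->
      0 < entropy W' < 1 /\ quetelet W' >= quetelet W * (1 + eps / 8).
Proof.
  assert (HstW : st W) by (split; [exact hW|split; assumption]).
  assert (HQ0 := Q_nonneg W HstW).
  set (Q0 := quetelet W) in *.
  set (T := Q0 * (1 + eps/8)).
  set (d := eps/2).
  assert (Hal := alpha_bounds).
  assert (HT : 0 <= T) by (unfold T; nra).
  assert (Hd : 0 <= d) by (unfold d; lra).
  assert (HTd : T + d <= alpha).
  { unfold T, d. assert (Q0 * eps <= (alpha - eps) * eps) by nra. nra. }
  set (mu := Rmin (1/4) (Rmin (entropy W) (1 - entropy W))).
  assert (Hmu : 0 < mu <= 1/4).
  { unfold mu. split; [|apply Rmin_l].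
    unfold Rmin. destruct (Rle_dec (entropy W) (1 - entropy W));
    destruct (Rle_dec (1/4) _); lra. }
  assert (Hmu1 : mu <= entropy W) by (unfold mu; eapply Rle_trans; [apply Rmin_r|apply Rmin_l]).
  assert (Hmu2 : mu <= 1 - entropy W) by (unfold mu; eapply Rle_trans; [apply Rmin_r|apply Rmin_r]).
  destruct (grow T d HT Hd HTd 5 mu Hmu) as [M HM].
  exists (S M). split; [lia|].
  intros n W' Hn HD.
  destruct (mono T d n W W' HT Hd HTd HD HstW) as [[_ [_ HH']] _].
  split; [exact HH'|].
  assert (HG := HM n W W' ltac:(lia) HstW Hmu1 Hmu2 HD).
  assert (Hpow : 1 + 5*(d/18) <= (1 + d/18)^5).
  { assert (0 <= d/18) by lra. set (x := d/18) in *. simpl.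
    assert (0 <= x*x) by nra. assert (0 <= x*x*x) by nra. assert (0 <= x*x*x*x) by nra.
    assert (0 <= x*x*x*x*x) by nra. nra. }
  assert (T <= (1 + d/18)^5 * Q0).
  { unfold T, d in *. assert ((1 + 5*(eps/2/18)) * Q0 <= (1 + eps/2/18)^5 * Q0) by (apply Rmult_le_compat_r; lra).
    nra. }
  change (quetelet W) with Q0 in HG. rewrite Rmin_left in HG by lra. lra.
Qed.
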